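(* Let $\mathcal{A}\in\mathbb{R}^{m\times n\times p}$, $\mathcal{B}\in\mathbb{R}^{m\times l\times p}$, let $T\subset\mathcal{P}([n])$ be a finite nonempty collection of column blocks, and let $\omega>0$. Let $\mathcal{X}^{(k)}$ be the iterates of the TRBAGS method (defined in the context) with step size $\omega$, started from a fixed initial tensor $\mathcal{X}^{(0)}\in\mathbb{R}^{n\times l\times p}$, where the blocks $\tau_1,\tau_2,\dots$ are sampled independently and uniformly from $T$. Let $\mathcal{X}^\ddagger$ be a minimizer of $\|\mathcal{A}\mathcal{X}-\mathcal{B}\|_F^2$, let $\sigma^2=\max_{\tau\in T}\sigma_{\max}^2(\mathrm{bcirc}(\mathcal{A}_{:\tau:}))$ and $c_{\min}(T)=\min_{i\in[n]}|\{\tau\in T: i\in\tau\}|$. Suppose $2\omega-\omega^2\sigma^2>0$ and set $$\rho=1-(2\omega-\omega^2\sigma^2)\frac{c_{\min}(T)}{|T|}\sigma_{\min}^2(\mathrm{bcirc}(\mathcal{A})).$$ Then for every $k\ge0$, $$\mathbb{E}\big[\|\mathcal{A}\mathcal{X}^{(k)}-\mathcal{A}\mathcal{X}^\ddagger\|_F^2\,\big|\,\mathcal{X}^{(0)}\big]\le\rho^k\,\|\mathcal{A}\mathcal{X}^{(0)}-\mathcal{A}\mathcal{X}^\ddagger\|_F^2.$$ If, in addition, the system $\mathcal{A}\mathcal{X}=\mathcal{A}\mathcal{X}^\ddagger$ has the unique solution $\mathcal{X}=\mathcal{X}^\ddagger$, then for every $k\ge0$, $$\mathbb{E}\big[\|\mathcal{X}^{(k)}-\mathcal{X}^\ddagger\|_F^2\,\big|\,\mathcal{X}^{(0)}\big]\le\kappa^2(\mathcal{A})\,\rho^k\,\|\mathcal{X}^{(0)}-\mathcal{X}^\ddagger\|_F^2,$$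 where $\kappa^2(\mathcal{A}):=\sigma_{\max}^2(\mathrm{bcirc}(\mathcal{A}^\dagger))\,\sigma_{\max}^2(\mathrm{bcirc}(\mathcal{A}))$.
   Context: All tensors are real third-order arrays. For $\mathcal{A}\in\mathbb{R}^{m\times n\times p}$ with frontal slices $\mathcal{A}_1,\dots,\mathcal{A}_p\in\mathbb{R}^{m\times n}$, $\mathrm{bcirc}(\mathcal{A})\in\mathbb{R}^{mp\times np}$ is the block-circulant matrix whose $(i,j)$ block ($i,j\in[p]$) is $\mathcal{A}_{((i-j)\bmod p)+1}$ (so its first block column is $\mathcal{A}_1,\mathcal{A}_2,\dots,\mathcal{A}_p$). For $\mathcal{B}\in\mathbb{R}^{n\times l\times p}$, $\mathrm{unfold}(\mathcal{B})\in\mathbb{R}^{np\times l}$ stacks the frontal slices $\mathcal{B}_1,\dots,\mathcal{B}_p$ vertically, and $\mathrm{fold}$ is its inverse. The t-product is $\mathcal{A}\mathcal{B}=\mathrm{fold}(\mathrm{bcirc}(\mathcal{A})\,\mathrm{unfold}(\mathcal{B}))\in\mathbb{R}^{m\times l\times p}$. The transpose $\mathcal{A}^*\in\mathbb{R}^{n\times m\times p}$ is obtained by transposing each frontal slice and reversing the order of the transposed slices $2$ through $p$ (so $\mathrm{bcirc}(\mathcal{A}^* )=\mathrm{bcirc}(\mathcal{A})^\top$). The pseudoinverse $\mathcal{A}^\dagger$ is the tensor with $\mathrm{bcirc}(\mathcal{A}^\dagger)=\mathrm{bcirc}(\mathcal{A})^\dagger$ (Moore–Penrose pseudoinverse). $\|\cdot\|_F$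 is the Frobenius norm (square root of the sum of squares of all entries). $\sigma_{\min}(\mathbf{M}),\sigma_{\max}(\mathbf{M})$ are the smallest and largest singular values of a matrix $\mathbf{M}$. For $\tau\subset[n]$, $\mathcal{A}_{:\tau:}\in\mathbb{R}^{m\times|\tau|\times p}$ consists of the lateral slices (columns) of $\mathcal{A}$ indexed by $\tau$, and $\mathcal{E}_\tau\in\mathbb{R}^{n\times|\tau|\times p}$ is the tensor whose first frontal slice consists of the columns of $I_n$ indexed by $\tau$ and whose other frontal slices are zero (so $\mathcal{A}\mathcal{E}_\tau=\mathcal{A}_{:\tau:}$). $\mathcal{P}([n])$ is the power set of $[n]=\{1,\dots,n\}$. TRBAGS method with step size $\omega$: given $\mathcal{X}^{(0)}$, for $k=1,2,\dots$ sample $\tau_k$ and set $\mathcal{X}^{(k)}=\mathcal{X}^{(k-1)}-\omega\,\mathcal{E}_{\tau_k}\mathcal{A}_{:\tau_k:}^*(\mathcal{A}\mathcal{X}^{(k-1)}-\mathcal{B})$. *)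

(* Defs.v *)
From HB Require Import structures.
From mathcomp Require Import all_boot all_order all_algebra.
From mathcomp Require Import classical_sets reals.
Set Implicit Arguments. Unset Strict Implicit. Unset Printing Implicit Defensive.
Import Order.TTheory GRing.Theory Num.Theory.
Local Open Scope ring_scope.

(* A real third-order tensor in R^{m x n x p}, given by its p frontal slices
   (slice k is the (k+1)-th frontal slice, 0-indexed). *)
Definition tensor (R : Type) (m n p : nat) := {ffun 'I_p -> 'M[R]_(m, n)}.

Section Tensors.
Variable R : realType.

Lemma ord_pos (p : nat) (i : 'I_p) : (0 < p)%N.
Proof. by apply: leq_ltn_trans (ltn_ord i). Qed.

Definition ord_subm (p : nat) (i j : 'I_p) : 'I_p :=
  Ordinal (ltn_pmod (i + p - j) (ord_pos i)).

Definition ord_negm (p : nat) (k : 'I_p) : 'I_p :=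
  Ordinal (ltn_pmod (p - k) (ord_pos k)).

Definition bcirc (m n p : nat) (A : tensor R m n p)
  : 'M[R]_(\sum_(i < p) m, \sum_(j < p) n) :=
  \mxblock_(i < p, j < p) A (ord_subm i j).

Definition tunfold (n l p : nat) (B : tensor R n l p)
  : 'M[R]_(\sum_(i < p) n, l) :=
  \mxcol_(i < p) B i.

Definition tfold (m l p : nat) (M : 'M[R]_(\sum_(i < p) m, l))
  : tensor R m l p :=
  [ffun k => submxcol M k].

Definition tprod (m n l p : nat) (A : tensor R m n p) (B : tensor R n l p)
  : tensor R m l p :=
  tfold (bcirc A *m tunfold B).

Definition ttr (m n p : nat) (A : tensor R m n p) : tensor R n m p :=
  [ffun k => (A (ord_negm k))^T].

Definition fro2 (m n p : nat) (A : tensor R m n p) : R :=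
  \sum_(k < p) \sum_(i < m) \sum_(j < n) (A k i j) ^+ 2.

Definition tcols (m n p : nat) (A : tensor R m n p) (tau : {set 'I_n})
  : tensor R m #|tau| p :=
  [ffun k => \matrix_(i < m, j < #|tau|) A k i (enum_val j)].

Definition Etau (n p : nat) (tau : {set 'I_n}) : tensor R n #|tau| p :=
  [ffun k => if val k == 0%N
             then \matrix_(i < n, j < #|tau|) ((i == enum_val j)%:R : R)
             else 0].

Definition sing_vals (a b : nat) (M : 'M[R]_(a, b)) : set R :=
  if (b <= a)%N
  then [set s : R | 0 <= s /\ eigenvalue (M^T *m M) (s ^+ 2)]%classic
  else [set s : R | 0 <= s /\ eigenvalue (M *m M^T) (s ^+ 2)]%classic.

Definition sigma_max (a b : nat) (M : 'M[R]_(a, b)) : R := sup (sing_vals M).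
Definition sigma_min (a b : nat) (M : 'M[R]_(a, b)) : R := inf (sing_vals M).

Definition is_mp_pinv (a b : nat) (M : 'M[R]_(a, b)) (X : 'M[R]_(b, a)) :=
  [/\ M *m X *m M = M, X *m M *m X = X,
      (M *m X)^T = M *m X & (X *m M)^T = X *m M].

Definition trbags_step (m n l p : nat) (omega : R) (A : tensor R m n p)
  (B : tensor R m l p) (tau : {set 'I_n}) (X : tensor R n l p)
  : tensor R n l p :=
  X - omega *: tprod (Etau p tau)
                 (tprod (ttr (tcols A tau)) (tprod A X - B)).

Definition trbags_iter (m n l p : nat) (omega : R) (A : tensor R m n p)
  (B : tensor R m l p) (X0 : tensor R n l p) (k : nat)
  (s : {ffun 'I_k -> {set 'I_n}}) : tensor R n l p :=
  foldl (fun X i => trbags_step omega A B (s i) X) X0 (enum 'I_k).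

(* Expectation of f(tau_1,...,tau_k) when tau_1,...,tau_k are sampled
   independently and uniformly from T. *)
Definition expect_iid (n k : nat) (T : {set {set 'I_n}})
  (f : {ffun 'I_k -> {set 'I_n}} -> R) : R :=
  (\sum_(s : {ffun 'I_k -> {set 'I_n}} | [forall i, s i \in T]) f s)
    / (#|T| ^ k)%:R.

Definition cmin (n : nat) (T : {set {set 'I_n}}) : nat :=
  \big[minn/#|T|]_(i < n) #|[set tau in T | i \in tau]|.

Definition sigmaT2 (m n p : nat) (A : tensor R m n p) (T : {set {set 'I_n}})
  : R :=
  \big[Num.max/0]_(tau in T) (sigma_max (bcirc (tcols A tau))) ^+ 2.

End Tensors.

(* Main.v *)
Require Import Defs.
From HB Require Import structures.
From mathcomp Require Import all_boot all_order all_algebra.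
From mathcomp Require Import classical_sets reals complex spectral sesquilinear.
From mathcomp Require Import ring lra zify.
Set Implicit Arguments. Unset Strict Implicit. Unset Printing Implicit Defensive.
Import Order.TTheory GRing.Theory Num.Theory.
Local Open Scope ring_scope.

Module MX.
Import Num.Def.
Local Open Scope sesquilinear_scope.
Section Ray.
Variable R : realType.
Local Notation C := (R[i]).
Local Notation f := (real_complex R).

Lemma conjf (x : R) : (f x)^* = f x.
Proof. apply/conj_Creal/complex_realP; by exists x. Qed.

Lemma map_conj_f m n (A : 'M[R]_(m,n)) : map_mx conjC (map_mx f A) = map_mx f A.
Proof. by apply/matrixP => i j; rewrite !mxE conjf. Qed.

Lemma rayleigh b (G : 'M[R]_b.+1) : G^T = G ->
  exists lo hi, [/\ eigenvalue G lo, eigenvalue G hi &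
   forall l (Y : 'M[R]_(b.+1, l)),
     lo * \tr (Y^T *m Y) <= \tr (Y^T *m G *m Y) <= hi * \tr (Y^T *m Y)].
Proof.
move=> sG.
set Gc := map_mx f G.
have Gct : (Gc ^t conjC) = Gc by rewrite -map_trmx map_conj_f map_trmx sG.
have Hn : Gc \is normalmx by apply/normalmxP; rewrite Gct.
have Hh : Gc \is hermsymmx by rewrite is_hermitianmxE expr0 scale1r Gct.
have /orthomx_spectralP HG := Hn.
set P := spectralmx Gc in HG; set d := spectral_diag Gc in HG.
have Pu : P \is unitarymx := spectral_unitarymx Gc.
have PPt : P *m (P ^t conjC) = 1%:M by apply/unitarymxP.
have PtP : (P ^t conjC) *m P = 1%:M by rewrite -invmx_unitary // mulVmx // unitarymx_unit.
rewrite invmx_unitary // in HG.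
have dreal : forall i, d 0 i \is Num.real.
  by move=> i; have /mxOverP := hermitian_spectral_diag_real Hh; apply.
pose g i := complex.Re (d 0 i).
have dg : forall i, d 0 i = f (g i) by move=> i; rewrite RRe_real.
have eig : forall i, eigenvalue G (g i).
  move=> i; rewrite eigenvalue_root_char -(fmorph_root f) map_char_poly -/Gc.
  rewrite -eigenvalue_root_char; apply/eigenvalueP; exists (row i P).
    rewrite -row_mul [in X in row _ (_ *m X)]HG !mulmxA PPt mul1mx row_mul row_diag_mx.
    by rewrite -scalemxAl -rowE dg.
  apply/eqP => /(congr1 (mulmx^~ ((P ^t conjC)))); rewrite mul0mx -row_mul PPt row1.
  by move/rowP/(_ i); rewrite !mxE eqxx /=; move/eqP; rewrite pnatr_eq0 eqxx.
case: (@arg_maxP _ _ _ ord0 predT g) => // ihi _ Hhi.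
case: (@arg_minP _ _ _ ord0 predT g) => // ilo _ Hlo.
exists (g ilo), (g ihi); split => // l Y.
set Yc := map_mx f Y; set W := P *m Yc.
have Ytc : (Yc ^t conjC) = Yc^T by rewrite -map_trmx map_conj_f.
have Wt : (W ^t conjC) = Yc^T *m (P ^t conjC) by rewrite /W trmx_mul map_mxM Ytc.
have e1 : f (\tr (Y^T *m G *m Y)) = \tr ((W ^t conjC) *m (diag_mx d *m W)).
  rewrite -trace_map_mx !map_mxM -map_trmx -/Gc -/Yc [in LHS]HG Wt /W !mulmxA.
  by [].
have e2 : f (\tr (Y^T *m Y)) = \tr ((W ^t conjC) *m W).
  by rewrite -trace_map_mx !map_mxM -map_trmx -/Yc Wt /W mulmxA -(mulmxA _ _ P) PtP mulmx1.
have ex : forall (D : 'rV[C]_b.+1), \tr ((W ^t conjC) *m (diag_mx D *m W)) =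
    \sum_j \sum_i D 0 i * (W i j * (W i j)^*).
  move=> D; rewrite /mxtrace; apply: eq_bigr => j _; rewrite mxE.
  apply: eq_bigr => i _; rewrite mul_diag_mx !mxE; ring.
have e3 : \tr ((W ^t conjC) *m W) = \tr ((W ^t conjC) *m (diag_mx (const_mx 1) *m W)).
  by rewrite diag_const_mx mul_scalar_mx scale1r.
have nn : forall i j, 0 <= W i j * (W i j)^* by move=> i j; exact: mul_conjC_ge0.
rewrite -!(@lecR R) !rmorphM /= e1 e2 e3 !ex !mulr_sumr.
apply/andP; split; apply: ler_sum => j _; rewrite mulr_sumr; apply: ler_sum => i _;
  rewrite [const_mx _ _ _]mxE mul1r; apply: (ler_wpM2r (nn i j)); rewrite dg lecR //.
by apply: Hlo.
by apply: Hhi.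
Qed.


Definition fr a b (Z : 'M[R]_(a,b)) := \tr (Z^T *m Z).
Definition ip a b (Y Z : 'M[R]_(a,b)) := \tr (Y^T *m Z).

Lemma frE a b (Z : 'M[R]_(a,b)) : fr Z = \sum_i \sum_j Z i j ^+ 2.
Proof.
rewrite /fr /mxtrace exchange_big /=; apply: eq_bigr => j _.
by rewrite mxE; apply: eq_bigr => i _; rewrite mxE expr2.
Qed.

Lemma fr_ge0 a b (Z : 'M[R]_(a,b)) : 0 <= fr Z.
Proof. by rewrite frE; apply: sumr_ge0 => i _; apply: sumr_ge0 => j _; exact: sqr_ge0. Qed.

Lemma fr_eq0 a b (Z : 'M[R]_(a,b)) : fr Z = 0 -> Z = 0.
Proof.
rewrite frE => /psumr_eq0P H; apply/matrixP => i j; rewrite mxE.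
have /(_ i isT) := H (fun i0 _ => sumr_ge0 _ (fun k _ => sqr_ge0 (Z i0 k))).
move/psumr_eq0P => /(_ (fun k _ => sqr_ge0 _) j isT) /eqP.
by rewrite sqrf_eq0 => /eqP.
Qed.

Lemma ipC a b (Y Z : 'M[R]_(a,b)) : ip Y Z = ip Z Y.
Proof. by rewrite /ip -mxtrace_tr trmx_mul trmxK. Qed.

Lemma fr_sub a b (Y Z : 'M[R]_(a,b)) : fr (Y - Z) = fr Y - 2 * ip Y Z + fr Z.
Proof.
rewrite /fr /ip.
have -> : (Y - Z)^T = Y^T - Z^T by rewrite linearB.
rewrite mulmxBl !mulmxBr !linearB /=.
have -> : \tr (Z^T *m Y) = \tr (Y^T *m Z) by rewrite -mxtrace_tr trmx_mul trmxK.
ring.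
Qed.

Lemma fr_scale a b c (Z : 'M[R]_(a,b)) : fr (c *: Z) = c ^+ 2 * fr Z.
Proof.
rewrite /fr.
have -> : (c *: Z)^T = c *: Z^T by rewrite linearZ.
by rewrite -scalemxAl -scalemxAr !linearZ /= mulrA expr2.
Qed.

Lemma fr_tr_quad a b l (M : 'M[R]_(a,b)) (Y : 'M[R]_(b,l)) :
  fr (M *m Y) = \tr (Y^T *m (M^T *m M) *m Y).
Proof. by rewrite /fr trmx_mul !mulmxA. Qed.

Definition svset a b (N : 'M[R]_(a,b)) :=
  [set s : R | 0 <= s /\ eigenvalue (N^T *m N) (s ^+ 2)]%classic.

Lemma gram_facts c d (N : 'M[R]_(c, d.+1)) : exists lo hi,
  [/\ 0 <= lo, 0 <= hi,
   forall l (Y : 'M[R]_(d.+1, l)),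
     lo * fr Y <= fr (N *m Y) <= hi * fr Y,
   hi <= sup (svset N) ^+ 2 & inf (svset N) ^+ 2 <= lo].
Proof.
have sG : (N^T *m N)^T = N^T *m N by rewrite trmx_mul trmxK.
have [lo [hi [elo ehi Hr]]] := rayleigh sG.
have ev : forall mu, eigenvalue (N^T *m N) mu -> [/\ 0 <= mu, lo <= mu & mu <= hi].
  move=> mu /eigenvalueP [v Hv vn0].
  have tp : 0 < fr v^T.
    rewrite lt_def fr_ge0 andbT; apply/eqP => /fr_eq0 /(congr1 trmx).
    by rewrite trmxK trmx0; apply/eqP.
  have key : \tr ((v^T)^T *m (N^T *m N) *m v^T) = mu * fr v^T.
    by rewrite trmxK Hv -scalemxAl /fr trmxK linearZ.
  have := Hr _ v^T; rewrite key => /andP [h1 h2].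
  have h0 : 0 <= mu * fr v^T by rewrite -key -fr_tr_quad fr_ge0.
  split.
  - by rewrite -(pmulr_lge0 _ tp).
  - by rewrite -(ler_pM2r tp).
  - by rewrite -(ler_pM2r tp).
have [lo0 _ _] := ev _ elo; have [hi0 _ _] := ev _ ehi.
have shi : svset N (Num.sqrt hi) by split; rewrite ?sqrtr_ge0 ?sqr_sqrtr.
have slo : svset N (Num.sqrt lo) by split; rewrite ?sqrtr_ge0 ?sqr_sqrtr.
exists lo, hi; split => //.
- by move=> l Y; rewrite fr_tr_quad; exact: Hr.
- have ub : ubound (svset N) (Num.sqrt hi).
    move=> s [s0 /ev [_ _ sh]]; rewrite -(ler_sqrt _ hi0) in sh.
    by rewrite -[s in s <= _]ger0_norm // -sqrtr_sqr.
  have := ub_le_sup (ex_intro _ _ ub) shi => H.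
  rewrite -[hi]sqr_sqrtr //; apply: lerXn2r; rewrite ?nnegrE ?sqrtr_ge0 //.
  exact: le_trans (sqrtr_ge0 _) H.
- have lb : lbound (svset N) 0 by move=> s [].
  have H0 := lb_le_inf (ex_intro _ _ slo) lb.
  have H1 := ge_inf (ex_intro _ _ lb) slo.
  rewrite -[lo]sqr_sqrtr //; apply: lerXn2r; rewrite ?nnegrE ?sqrtr_ge0 //.
Qed.

Lemma fr0 a b : fr (0 : 'M[R]_(a,b)) = 0.
Proof. by rewrite /fr trmx0 mul0mx mxtrace0. Qed.

Lemma ipZr a b c (Y Z : 'M[R]_(a,b)) : ip Y (c *: Z) = c * ip Y Z.
Proof. by rewrite /ip -scalemxAr linearZ. Qed.

Lemma sv_upper a b l (M : 'M[R]_(a,b)) (Y : 'M[R]_(b,l)) :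
  fr (M *m Y) <= sigma_max M ^+ 2 * fr Y.
Proof.
have triv : fr (M *m Y) = 0 -> fr (M *m Y) <= sigma_max M ^+ 2 * fr Y.
  by move=> ->; rewrite mulr_ge0 ?sqr_ge0 ?fr_ge0.
rewrite /sigma_max /sing_vals; case: leqP => hab.
- case: b M Y hab triv => [|b] M Y hab triv.
    by rewrite [Y]flatmx0 mulmx0 !fr0 mulr0.
  have [lo [hi [_ _ Hr Hhi _]]] := gram_facts M.
  have /andP [_ h] := Hr _ Y.
  apply: le_trans h _; apply: ler_wpM2r; [exact: fr_ge0|exact: Hhi].
- case: a M Y hab triv => [|a] M Y hab triv.
    by rewrite [M *m Y]flatmx0 fr0 mulr_ge0 ?sqr_ge0 ?fr_ge0.
  have eMM : M *m M^T = M^T^T *m M^T by rewrite trmxK.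
  rewrite eMM.
  have [lo [hi [_ hi0 Hr Hhi _]]] := gram_facts M^T.
  apply: le_trans (_ : hi * fr Y <= _); last by apply: ler_wpM2r; [exact: fr_ge0|exact: Hhi].
  set Z := M *m Y.
  have /andP [_ h] := Hr _ Z.
  have eZ : fr Z = ip (M^T *m Z) Y by rewrite ipC /fr /ip {1}/Z trmx_mul mulmxA.
  have h2 := fr_ge0 (hi *: Y - M^T *m Z).
  rewrite fr_sub fr_scale ipC ipZr -eZ in h2.
  have [hp|] := ltrP 0 hi.
    rewrite -(ler_pM2l hp); nra.
  move=> hle; have hz : hi = 0 by apply/eqP; rewrite eq_le hle hi0.
  rewrite hz mul0r in h; have : fr (M^T *m Z) = 0.
    by apply/eqP; rewrite eq_le h fr_ge0.
  by move/fr_eq0 => h0; rewrite eZ h0 /ip trmx0 mul0mx mxtrace0 hz mul0r.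
Qed.

Lemma sv_lower a b l (M : 'M[R]_(a,b)) (Y : 'M[R]_(b,l)) :
  sigma_min M ^+ 2 * fr (M *m Y) <= fr (M^T *m (M *m Y)).
Proof.
have triv : fr (M *m Y) = 0 -> sigma_min M ^+ 2 * fr (M *m Y) <= fr (M^T *m (M *m Y)).
  by move=> ->; rewrite mulr0 fr_ge0.
rewrite /sigma_min /sing_vals; case: leqP => hab.
- case: b M Y hab triv => [|b] M Y hab triv.
    by rewrite [Y]flatmx0 mulmx0 fr0 mulr0 fr_ge0.
  have [lo [hi [lo0 _ Hr _ Hlo]]] := gram_facts M.
  apply: le_trans (_ : lo * fr (M *m Y) <= _).
    by apply: ler_wpM2r => //; exact: fr_ge0.
  set W := M^T *m (M *m Y).
  have eI : ip W Y = fr (M *m Y) by rewrite /ip /fr /W !trmx_mul trmxK !mulmxA.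
  have /andP [h _] := Hr _ Y.
  have h2 := fr_ge0 (W - lo *: Y).
  rewrite fr_sub fr_scale ipZr eI in h2.
  nra.
- case: a M Y hab triv => [|a] M Y hab triv.
    by rewrite [M *m Y]flatmx0 fr0 mulr0 fr_ge0.
  have eMM : M *m M^T = M^T^T *m M^T by rewrite trmxK.
  rewrite eMM.
  have [lo [hi [lo0 _ Hr _ Hlo]]] := gram_facts M^T.
  have /andP [h _] := Hr _ (M *m Y).
  apply: le_trans h; apply: ler_wpM2r => //; exact: fr_ge0.
Qed.
End Ray.

End MX.
Import MX.

Lemma modsub_eq (p i j : nat) : (i < p)%N -> (j < p)%N ->
  ((i + p - j) %% p = if (j <= i)%N then i - j else i + p - j)%N.
Proof.
move=> ip jp; case: leqP => h.
  have -> : (i + p - j = (i - j) + p)%N by lia.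
  by rewrite modnDr modn_small //; lia.
by rewrite modn_small //; lia.
Qed.

Lemma negm_subm (p : nat) (i j : 'I_p) :
  ord_negm (ord_subm i j) = ord_subm j i.
Proof.
apply/val_inj => /=.
have ip := ltn_ord i; have jp := ltn_ord j.
rewrite (@modsub_eq _ _ _ ip jp) (@modsub_eq _ _ _ jp ip).
case: (leqP j i) => h1; case: (leqP i j) => h2.
- have -> : i = j :> nat by lia.
  by rewrite subnn subn0 modnn.
- by rewrite modn_small; lia.
- have -> : (p - (i + p - j) = j - i)%N by lia. by rewrite modn_small; lia.
- lia.
Qed.

Lemma subm_eq0 (p : nat) (i j : 'I_p) :
  (val (ord_subm i j) == 0)%N = (i == j).
Proof.
rewrite /= (@modsub_eq _ _ _ (ltn_ord i) (ltn_ord j)).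
apply/idP/eqP => [|->]; last by rewrite leqnn subnn.
have := ltn_ord i; have := ltn_ord j. case: (leqP j i) => h ? ? /eqP h2; apply/val_inj => /=; lia.
Qed.

Section T.
Variable R : realType.

Lemma U_fold n l p (M : 'M[R]_(\sum_(i<p) n, l)) : tunfold (tfold M) = M.
Proof. by rewrite /tunfold /tfold; under eq_mxcol do rewrite ffunE; exact: submxcolK. Qed.

Lemma fold_U n l p (X : tensor R n l p) : tfold (tunfold X) = X.
Proof. by apply/ffunP => k; rewrite ffunE /tunfold mxcolK. Qed.

Lemma U_inj n l p : injective (@tunfold R n l p).
Proof. by move=> X Y /(congr1 (@tfold R n l p)); rewrite !fold_U. Qed.

Lemma U_prod m n l p (A : tensor R m n p) (X : tensor R n l p) :
  tunfold (tprod A X) = bcirc A *m tunfold X.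
Proof. by rewrite /tprod U_fold. Qed.

Lemma U_sub n l p (X Y : tensor R n l p) : tunfold (X - Y) = tunfold X - tunfold Y.
Proof. by rewrite /tunfold -mxcolN -mxcolD; apply: eq_mxcol => i; rewrite !ffunE. Qed.

Lemma U_scale n l p c (X : tensor R n l p) : tunfold (c *: X) = c *: tunfold X.
Proof.
rewrite /tunfold -mul_mx_scalar mxcol_mul; apply: eq_mxcol => i.
by rewrite ffunE mul_mx_scalar.
Qed.

Lemma fro2_fr n l p (X : tensor R n l p) : fro2 X = fr (tunfold X).
Proof.
rewrite /fro2 /fr /tunfold tr_mxcol mul_mxrow_mxcol raddf_sum.
by apply: eq_bigr => k _; rewrite -(frE (X k)).
Qed.

Lemma bcirc_ttr m n p (A : tensor R m n p) : bcirc (ttr A) = (bcirc A)^T.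
Proof.
rewrite /bcirc tr_mxblock; apply: eq_mxblock => i j.
by rewrite ffunE negm_subm.
Qed.


Lemma bcirc_tcols m n p (A : tensor R m n p) (tau : {set 'I_n}) :
  bcirc (tcols A tau) = bcirc A *m bcirc (Etau R p tau).
Proof.
rewrite /bcirc mul_mxblock; apply: eq_mxblock => i k.
rewrite (bigD1 k) //= big1 ?addr0; last first.
  by move=> j hj; rewrite ffunE subm_eq0 (negbTE hj) mulmx0.
rewrite !ffunE subm_eq0 eqxx; apply/matrixP => r c; rewrite !mxE.
rewrite (bigD1 (enum_val c)) //= !mxE eqxx mulr1 big1 ?addr0 //.
by move=> x hx; rewrite mxE (negbTE hx) mulr0.
Qed.

Lemma fr_mxcol p (p_ : 'I_p -> nat) l (C_ : forall i, 'M[R]_(p_ i, l)) :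
  fr (\mxcol_i C_ i) = \sum_i fr (C_ i).
Proof. by rewrite /fr tr_mxcol mul_mxrow_mxcol raddf_sum. Qed.

Definition Sel n (tau : {set 'I_n}) : 'M[R]_(n, #|tau|) :=
  \matrix_(i < n, j < #|tau|) ((i == enum_val j)%:R).

Lemma EtauT_mul n l p (tau : {set 'I_n}) (W : 'M[R]_(\sum_(i<p) n, l)) :
  (bcirc (Etau R p tau))^T *m W = \mxcol_i ((Sel tau)^T *m submxcol W i).
Proof.
rewrite -[W in LHS]submxcolK /bcirc tr_mxblock mul_mxblock_mxrow.
apply: eq_mxcol => i; rewrite (bigD1 i) //= big1 ?addr0; last first.
  by move=> j hj; rewrite ffunE subm_eq0 (negbTE hj) trmx0 mul0mx.
by rewrite ffunE subm_eq0 eqxx.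
Qed.

Lemma fr_Sel n l (tau : {set 'I_n}) (Y : 'M[R]_(n, l)) :
  fr ((Sel tau)^T *m Y) = \sum_(r in tau) \sum_k Y r k ^+ 2.
Proof.
rewrite frE (big_enum_val (fun r => \sum_k Y r k ^+ 2)) /=.
apply: eq_bigr => c _; apply: eq_bigr => k _; rewrite !mxE.
rewrite (bigD1 (enum_val c)) //= !mxE eqxx mul1r big1 ?addr0 //.
by move=> x hx; rewrite !mxE (negbTE hx) mul0r.
Qed.

Lemma cmin_le n (T : {set {set 'I_n}}) r : (cmin T <= #|[set tau in T | r \in tau]|)%N.
Proof.
rewrite /cmin unlock; have : r \in index_enum 'I_n by rewrite mem_index_enum.
elim: (index_enum _) => //= a s IH; rewrite inE => /orP [/eqP <-|/IH h].
  exact: geq_minl.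
exact: leq_trans (geq_minr _ _) h.
Qed.

Lemma sel_bound n l p (T : {set {set 'I_n}}) (W : 'M[R]_(\sum_(i<p) n, l)) :
  (cmin T)%:R * fr W <= \sum_(tau in T) fr ((bcirc (Etau R p tau))^T *m W).
Proof.
have -> : \sum_(tau in T) fr ((bcirc (Etau R p tau))^T *m W) =
  \sum_(tau in T) \sum_i \sum_r (if r \in tau then \sum_k (submxcol W i) r k ^+ 2 else 0).
  apply: eq_bigr => tau _; rewrite EtauT_mul fr_mxcol; apply: eq_bigr => i _.
  by rewrite fr_Sel big_mkcond.
rewrite exchange_big /= -[W in fr W]submxcolK fr_mxcol mulr_sumr.
apply: ler_sum => i _; set Y := submxcol W i.
rewrite exchange_big frE mulr_sumr /=; apply: ler_sum => r _.
rewrite -big_mkcondr /=.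
have -> : \sum_(tau in T | r \in tau) \sum_k Y r k ^+ 2 =
          \sum_(tau in [set tau in T | r \in tau]) \sum_k Y r k ^+ 2.
  by apply: eq_bigl => tau; rewrite inE.
rewrite sumr_const -[_ *+ #|_|]mulr_natl; apply: ler_wpM2r.
  by apply: sumr_ge0 => k _; exact: sqr_ge0.
by rewrite ler_nat cmin_le.
Qed.
End T.

Section M.
Variable R : realType.

Lemma quad0 (a b : R) : 0 <= a -> 0 <= b ->
  (forall t, 0 <= - (2 * t * a) + t ^+ 2 * b) -> a = 0.
Proof.
move=> a0 b0 H.
have b1 : 0 < b + 1 by lra.
set t := a / (b + 1).
have ht : t * (b + 1) = a by rewrite /t mulfVK // gt_eqF.
have t0 : 0 <= t by rewrite /t divr_ge0 // ltW.
have := H t; nra.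
Qed.

Lemma bigmax_ge (I : finType) (P : pred I) (F : I -> R) i :
  P i -> F i <= \big[Num.max/0]_(j | P j) F j.
Proof.
rewrite unlock; have : i \in index_enum I by rewrite mem_index_enum.
elim: (index_enum _) => //= a s IH; rewrite inE => /orP [/eqP <- ->|/IH h Pi].
  by rewrite le_max lexx.
case: ifP => _; last exact: h.
by rewrite le_max (h Pi) orbT.
Qed.

Lemma normal_eq m n l p (A : tensor R m n p) (B : tensor R m l p) (Xd : tensor R n l p) :
  (forall X, fro2 (tprod A Xd - B) <= fro2 (tprod A X - B)) ->
  (bcirc A)^T *m (bcirc A *m tunfold Xd - tunfold B) = 0.
Proof.
move=> Hmin; set r := _ - _; set V := _^T *m r.
have key : forall t, 0 <= - (2 * t * fr V) + t ^+ 2 * fr (bcirc A *m V).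
  move=> t; have := Hmin (Xd - t *: tfold V).
  rewrite !fro2_fr !U_sub !U_prod U_sub U_scale U_fold.
  rewrite mulmxBr -scalemxAr addrAC -/r (fr_sub r) fr_scale ipZr.
  have -> : ip r (bcirc A *m V) = fr V by rewrite /ip /fr /V trmx_mul trmxK mulmxA.
  lra.
exact/fr_eq0/(quad0 (fr_ge0 V) (fr_ge0 _) key).
Qed.

Lemma one_step m n l p (omega : R) (A : tensor R m n p) (B : tensor R m l p) (T : {set {set 'I_n}}) (Xd X : tensor R n l p) :
  (forall X, fro2 (tprod A Xd - B) <= fro2 (tprod A X - B)) ->
  0 <= 2 * omega - omega ^+ 2 * sigmaT2 A T ->
  \sum_(tau in T) fro2 (tprod A (trbags_step omega A B tau X) - tprod A Xd)
   <= (#|T|%:R - (2 * omega - omega ^+ 2 * sigmaT2 A T) * (cmin T)%:R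
                   * sigma_min (bcirc A) ^+ 2)
      * fro2 (tprod A X - tprod A Xd).
Proof.
move=> Hmin c0.
set c := 2 * omega - _ in c0 *.
set bA := bcirc A.
have Hn : bA^T *m (bA *m tunfold Xd - tunfold B) = 0 := normal_eq Hmin.
set e := bA *m tunfold X - bA *m tunfold Xd.
have fe : fro2 (tprod A X - tprod A Xd) = fr e by rewrite fro2_fr U_sub !U_prod.
set W := bA^T *m e.
have per : forall tau, tau \in T ->
    fro2 (tprod A (trbags_step omega A B tau X) - tprod A Xd)
    <= fr e - c * fr ((bcirc (Etau R p tau))^T *m W).
  move=> tau hT.
  set S := bcirc (Etau R p tau).
  set K := bcirc (tcols A tau).
  have hK : K = bA *m S := bcirc_tcols A tau.
  have hr : bA *m tunfold X - tunfold B = e + (bA *m tunfold Xd - tunfold B).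
    by rewrite /e addrA subrK.
  have hKr : K^T *m (bA *m tunfold X - tunfold B) = K^T *m e.
    by rewrite hr mulmxDr hK trmx_mul -mulmxA -[X in _ + X]mulmxA Hn mulmx0 addr0.
  have eq1 : tunfold (tprod A (trbags_step omega A B tau X) - tprod A Xd)
             = e - omega *: (K *m (K^T *m e)).
    rewrite U_sub !U_prod /trbags_step U_sub U_scale !U_prod bcirc_ttr U_sub U_prod.
    rewrite -/bA -/K hKr mulmxBr -scalemxAr /bA [bcirc A *m (_ *m (_ *m e))]mulmxA -bcirc_tcols -/K -/bA addrAC.
    by [].
  rewrite fro2_fr eq1 fr_sub fr_scale ipZr.
  have ip1 : ip e (K *m (K^T *m e)) = fr (K^T *m e).
    by rewrite /ip /fr trmx_mul trmxK !mulmxA.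
  have sv := sv_upper K (K^T *m e).
  have sT : sigma_max K ^+ 2 <= sigmaT2 A T.
    by apply: (@bigmax_ge _ (fun t => t \in T) (fun t => sigma_max (bcirc (tcols A t)) ^+ 2)).
  have KW : fr (K^T *m e) = fr (S^T *m W) by rewrite hK trmx_mul -mulmxA.
  rewrite ip1 -KW.
  have f0 := fr_ge0 (K^T *m e).
  have h1 : fr (K *m (K^T *m e)) <= sigmaT2 A T * fr (K^T *m e).
    apply: le_trans sv _; apply: ler_wpM2r => //.
  have h2 : omega ^+ 2 * fr (K *m (K^T *m e)) <= omega ^+ 2 * (sigmaT2 A T * fr (K^T *m e)).
    by apply: ler_wpM2l => //; exact: sqr_ge0.
  rewrite /c; lra.
rewrite fe.
apply: le_trans (_ : \sum_(tau in T) (fr e - c * fr ((bcirc (Etau R p tau))^T *m W)) <= _).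
  by apply: ler_sum => tau hT; exact: per.
rewrite sumrB sumr_const -mulr_sumr -[fr e *+ _]mulr_natl.
have sb := sel_bound T W.
have sl : sigma_min bA ^+ 2 * fr e <= fr W.
  have := sv_lower bA (tunfold X - tunfold Xd); rewrite mulmxBr.
  by [].
have cm0 : 0 <= (cmin T)%:R :> R by exact: ler0n.
have h3 : c * ((cmin T)%:R * (sigma_min bA ^+ 2 * fr e)) <= c * ((cmin T)%:R * fr W).
  by apply: ler_wpM2l => //; apply: ler_wpM2l.
have h4 : c * ((cmin T)%:R * fr W) <= c * \sum_(tau in T) fr ((bcirc (Etau R p tau))^T *m W).
  by apply: ler_wpM2l.
lra.
Qed.
End M.

Section F.
Variable R : realType.

Definition ext (S : Type) k (s : {ffun 'I_k -> S}) (tau : S) : {ffun 'I_k.+1 -> S} :=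
  [ffun i => if unlift ord_max i is Some j then s j else tau].

Definition restr (S : Type) k (s : {ffun 'I_k.+1 -> S}) : {ffun 'I_k -> S} :=
  [ffun j => s (lift ord_max j)].

Lemma foldl_map' (T1 T2 U : Type) (f : U -> T2 -> U) (g : T1 -> T2) z s :
  foldl f z (map g s) = foldl (fun x y => f x (g y)) z s.
Proof. by elim: s z => //= a s IH z; rewrite IH. Qed.

Lemma eq_foldl' (T1 U : Type) (f g : U -> T1 -> U) z s :
  (forall x y, f x y = g x y) -> foldl f z s = foldl g z s.
Proof. by move=> H; elim: s z => //= a s IH z; rewrite H IH. Qed.

Lemma iter_succ m n l p (omega : R) (A : tensor R m n p) B (X0 : tensor R n l p) k
  (s : {ffun 'I_k.+1 -> {set 'I_n}}) :
  trbags_iter omega A B X0 s =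
  trbags_step omega A B (s ord_max) (trbags_iter omega A B X0 (restr s)).
Proof.
rewrite /trbags_iter enum_ordSr foldl_rcons foldl_map'; congr trbags_step.
apply: eq_foldl' => x j; rewrite /restr ffunE; congr trbags_step; congr (s _).
by apply/val_inj; rewrite /= /bump leqNgt ltn_ord.
Qed.

Lemma sum_succ (S : finType) k (T : {set S}) (F : {ffun 'I_k.+1 -> S} -> R) :
  \sum_(s : {ffun 'I_k.+1 -> S} | [forall i, s i \in T]) F s =
  \sum_(s : {ffun 'I_k -> S} | [forall i, s i \in T]) \sum_(tau in T) F (ext s tau).
Proof.
rewrite pair_big_dep /=.
rewrite (reindex (fun st : {ffun 'I_k -> S} * S => ext st.1 st.2)) /=.
  apply: eq_bigl => -[s tau] /=.
  apply/forallP/andP => [H|[/forallP H1 H2] i].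
    split; last by have := H ord_max; rewrite ffunE unlift_none.
    by apply/forallP => j; have := H (lift ord_max j); rewrite ffunE liftK.
  by rewrite ffunE; case: unliftP => [j _|_]; [exact: H1|exact: H2].
exists (fun s => (restr s, s ord_max)).
  by move=> [s tau] _; rewrite /restr /= ffunE unlift_none; congr pair;
     apply/ffunP => j; rewrite !ffunE liftK.
move=> s _; apply/ffunP => i; rewrite /ext /restr ffunE.
by case: unliftP => [j ->|->]; rewrite ?ffunE.
Qed.
End F.

Section G.
Variable R : realType.

Lemma expect_le n k (T : {set {set 'I_n}}) (f g : {ffun 'I_k -> {set 'I_n}} -> R) :
  (forall s, f s <= g s) -> expect_iid T f <= expect_iid T g.
Proof.
move=> H; rewrite /expect_iid; apply: ler_wpM2r; first by rewrite invr_ge0 ler0n.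
by apply: ler_sum => s _.
Qed.

Lemma expect_scale n k (T : {set {set 'I_n}}) (f : {ffun 'I_k -> {set 'I_n}} -> R) c :
  expect_iid T (fun s => c * f s) = c * expect_iid T f.
Proof. by rewrite /expect_iid -mulr_sumr mulrA. Qed.

Lemma iter0 m n l p (omega : R) (A : tensor R m n p) B (X0 : tensor R n l p)
  (s : {ffun 'I_0 -> {set 'I_n}}) : trbags_iter omega A B X0 s = X0.
Proof.
rewrite /trbags_iter; have : size (enum 'I_0) = 0%N by rewrite size_enum_ord.
by case: (enum 'I_0).
Qed.

Lemma sum0 n (T : {set {set 'I_n}}) (F : {ffun 'I_0 -> {set 'I_n}} -> R) c :
  (forall s, F s = c) -> \sum_(s : {ffun 'I_0 -> {set 'I_n}} | [forall i, s i \in T]) F s = c.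
Proof.
move=> H; rewrite (eq_bigl xpredT); last by move=> s; apply/forallP => -[].
under eq_bigr do rewrite H.
by rewrite sumr_const card_ffun card_ord expn0 mulr1n.
Qed.
End G.

Theorem theorem2 (R : realType) (m n l p : nat)
  (A : tensor R m n p) (B : tensor R m l p) (T : {set {set 'I_n}})
  (omega : R) (X0 Xd : tensor R n l p) :
  (0 < #|T|)%N ->
  0 < omega ->
  (forall X : tensor R n l p,
     fro2 (tprod A Xd - B) <= fro2 (tprod A X - B)) ->
  2 * omega - omega ^+ 2 * sigmaT2 A T > 0 ->
  let rho := 1 - (2 * omega - omega ^+ 2 * sigmaT2 A T)
                 * ((cmin T)%:R / (#|T|)%:R)
                 * (sigma_min (bcirc A)) ^+ 2 in
  (forall k : nat,
     expect_iid (k:=k) T (fun s => fro2 (tprod A (trbags_iter omega A B X0 s)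
                                  - tprod A Xd))
     <= rho ^+ k * fro2 (tprod A X0 - tprod A Xd)) /\
  ((forall X : tensor R n l p, tprod A X = tprod A Xd -> X = Xd) ->
   forall Ad : tensor R n m p, is_mp_pinv (bcirc A) (bcirc Ad) ->
   let kappa2 := (sigma_max (bcirc Ad)) ^+ 2 * (sigma_max (bcirc A)) ^+ 2 in
   forall k : nat,
     expect_iid (k:=k) T (fun s => fro2 (trbags_iter omega A B X0 s - Xd))
     <= kappa2 * rho ^+ k * fro2 (X0 - Xd)).
Proof.
move=> hT0 hom Hmin hc rho.
set Q : R := (#|T|)%:R.
have Q0 : 0 < Q by rewrite /Q ltr0n.
set c := 2 * omega - omega ^+ 2 * sigmaT2 A T.
set ef := fun X : tensor R n l p => fro2 (tprod A X - tprod A Xd).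
have ef0 : forall X, 0 <= ef X by move=> X; rewrite /ef fro2_fr fr_ge0.
have Qrho : Q * rho = Q - c * (cmin T)%:R * sigma_min (bcirc A) ^+ 2.
  by rewrite /rho /Q /c; field; rewrite pnatr_eq0 -lt0n.
have step : forall X, \sum_(tau in T) ef (trbags_step omega A B tau X) <= Q * rho * ef X.
  by move=> X; rewrite Qrho; exact: (one_step X Hmin (ltW hc)).
have zero_case : rho < 0 -> forall X, ef X = 0.
  move=> rn X; have := step X.
  have : 0 <= \sum_(tau in T) ef (trbags_step omega A B tau X) by apply: sumr_ge0.
  have := ef0 X; have : Q * rho < 0 by rewrite pmulr_rlt0.
  move=> h1 h2 h3 h4; apply/eqP; rewrite eq_le h2 andbT.
  nra.
have SE : 0 <= rho -> forall k, \sum_(s : {ffun 'I_k -> {set 'I_n}} | [forall i, s i \in T])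
      ef (trbags_iter omega A B X0 s) <= (Q * rho) ^+ k * ef X0.
  move=> r0; elim => [|k IH].
    by rewrite (@sum0 R _ _ _ (ef X0)) ?expr0 ?mul1r // => s; rewrite iter0.
  rewrite sum_succ.
  apply: le_trans (_ : \sum_(s : {ffun 'I_k -> {set 'I_n}} | [forall i, s i \in T])
      (Q * rho) * ef (trbags_iter omega A B X0 s) <= _).
    apply: ler_sum => s _.
    have -> : \sum_(tau in T) ef (trbags_iter omega A B X0 (ext s tau)) =
              \sum_(tau in T) ef (trbags_step omega A B tau (trbags_iter omega A B X0 s)).
      apply: eq_bigr => tau _; rewrite iter_succ /ext ffunE unlift_none.
      congr (ef (trbags_step _ _ _ _ (trbags_iter _ _ _ _ _))).
      by apply/ffunP => j; rewrite /restr !ffunE liftK.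
    exact: step.
  rewrite -mulr_sumr; have Qr0 : 0 <= Q * rho by rewrite mulr_ge0 // ltW.
  apply: le_trans (ler_wpM2l Qr0 IH) _.
  by rewrite exprS mulrA.
have part1 : forall k, expect_iid (k:=k) T (fun s => ef (trbags_iter omega A B X0 s))
                        <= rho ^+ k * ef X0.
  move=> k; have [r0|rn] := lerP 0 rho.
    rewrite /expect_iid natrX -/Q ler_pdivrMr ?exprn_gt0 //.
    apply: le_trans (SE r0 k) _; rewrite exprMn [_ * ef X0 * _]mulrC mulrA.
    by rewrite [Q ^+ k * _]mulrC.

  rewrite /expect_iid big1 ?mul0r; last by move=> s _; exact: zero_case.
  by rewrite zero_case // mulr0.
split; first exact: part1.
move=> Hinj Ad [HM _ _ _] kappa2 k.
set bA := bcirc A; set bAd := bcirc Ad.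
have injA : forall D : 'M[R]_(\sum_(i < p) n, l), bA *m D = 0 -> D = 0.
  move=> D hD.
  have h : tprod A (Xd - tfold D) = tprod A Xd.
    by apply: U_inj; rewrite !U_prod U_sub U_fold mulmxBr hD subr0.
  have := Hinj _ h => /eqP; rewrite subr_eq addrC -subr_eq subrr eq_sym => /eqP h0.
  by rewrite -[D]U_fold h0 -(subrr Xd) U_sub subrr.
have b1 : forall X, fro2 (X - Xd) <= sigma_max bAd ^+ 2 * ef X.
  move=> X; rewrite /ef !fro2_fr !U_sub !U_prod -/bA -mulmxBr.
  set D := tunfold X - tunfold Xd.
  have eD : bAd *m (bA *m D) = D.
    apply/eqP; rewrite -subr_eq0; apply/eqP; apply: injA.
    by rewrite mulmxBr !mulmxA HM subrr.
  by rewrite -{1}eD; exact: sv_upper.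
have b2 : ef X0 <= sigma_max bA ^+ 2 * fro2 (X0 - Xd).
  by rewrite /ef !fro2_fr !U_sub !U_prod -/bA -mulmxBr; exact: sv_upper.
apply: (@le_trans _ _ (expect_iid T (fun s : {ffun 'I_k -> {set 'I_n}} => sigma_max bAd ^+ 2 * ef (trbags_iter omega A B X0 s)))).
  by apply: expect_le => s; exact: b1.
  rewrite expect_scale.
  have [r0|rn] := lerP 0 rho.
    apply: le_trans (ler_wpM2l (sqr_ge0 _) (part1 k)) _.
    have h' : rho ^+ k * ef X0 <= rho ^+ k * (sigma_max bA ^+ 2 * fro2 (X0 - Xd)).
      by apply: ler_wpM2l; [exact: exprn_ge0|exact: b2].
    have h'' := ler_wpM2l (sqr_ge0 (sigma_max bAd)) h'.
    apply: le_trans h'' _.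
    have -> : kappa2 * rho ^+ k * fro2 (X0 - Xd) =
       sigma_max bAd ^+ 2 * (rho ^+ k * (sigma_max bA ^+ 2 * fro2 (X0 - Xd))).
      by rewrite /kappa2; ring.
    by [].
  rewrite /expect_iid.
  have -> : \sum_(s : {ffun 'I_k -> {set 'I_n}} | [forall i, s i \in T])
      ef (trbags_iter omega A B X0 s) = 0 by apply: big1 => s _; exact: zero_case.
  rewrite mul0r mulr0.
  have : fro2 (X0 - Xd) <= 0 by have := b1 X0; rewrite zero_case // mulr0.
  have := fro2_fr (X0 - Xd); have := fr_ge0 (tunfold (X0 - Xd)) => h1 h2 h3.
  have -> : fro2 (X0 - Xd) = 0 by apply/eqP; rewrite eq_le h3 h2 h1.
  by rewrite mulr0.
Qed.
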